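(* Let $W\subseteq T^*Q$ be a subbundle, $\mathfrak H$ a quadratic form on $T^*Q$, $h,\hat h:Q\to\mathbb R$ smooth functions, $\hat W$ a complement of $W$ with projections $\hat{\mathfrak p}:T^*Q\to\hat W$, $\mathfrak p:T^*Q\to W$, and $\mathfrak K$, $\mathfrak L$ quadratic forms on $\hat W$ and $W$ respectively. Put $\hat{\mathfrak H}=\mathfrak K\circ\hat{\mathfrak p}+\mathfrak L\circ\mathfrak p$. Then $\mathbb F(\mathfrak L\circ\mathfrak p)(\sigma)=0$ for all $\sigma\in\hat W$, and the potential equation $$\big(\mathrm d\hat h\circ\mathbb F\mathfrak H-\mathrm dh\circ\mathbb F\hat{\mathfrak H}\big)\circ(\mathbb F\hat{\mathfrak H})^{-1}(\mathsf v)=0\quad\forall\,\mathsf v\in W^\circ$$ holds if and only if $$\big(\mathrm d\hat h\circ\mathbb F\mathfrak H-\mathrm dh\circ\mathbb F(\mathfrak K\circ\hat{\mathfrak p})\big)(\sigma)=0\quad\forall\,\sigma\in\hat W.$$ In particular the potential equation does not depend on $\mathfrak L$.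
   Context: $Q$ is a smooth connected manifold of dimension $n$, $\pi:T^*Q\to Q$ its cotangent bundle, $\langle\cdot,\cdot\rangle$ the pairing between $T_q^*Q$ and $T_qQ$. For a smooth vector subbundle $V\subseteq T^*Q$, a quadratic form on $V$ is a function $\mathfrak F(\alpha)=\tfrac12\langle\alpha,\rho^\sharp(\alpha)\rangle$ with $\rho$ a smooth fibered positive-definite inner product on $V^*$, $\rho^\flat:V^*\to V$ given by $\langle\rho^\flat(u),v\rangle=\rho(u,v)$, $\rho^\sharp=(\rho^\flat)^{-1}$. A complement of $W$ is a smooth subbundle $\hat W$ with $T^*Q=\hat W\oplus W$. $W^\circ\subseteq TQ$ is the annihilator of $W$. The fiber derivative of a smooth $f:T^*Q\to\mathbb R$ is $\mathbb Ff:T^*Q\to TQ$ with $\langle\beta,\mathbb Ff(\alpha)\rangle=\frac{d}{dt}f(\alpha+t\beta)|_{t=0}$ ($\alpha,\beta\in T_q^*Q$); for a quadratic form $\mathfrak F$ on $T^*Q$, $\mathbb F\mathfrak F=\rho^\sharp$ is a bundle isomorphism. For a smooth function $g$ on $Q$ and a fiber-preserving map $F:T^*Q\to TQ$, $\mathrm dg\circ F$ denotes $\alpha\mapsto\langle \mathrm dg(\pi(\alpha)),F(\alpha)\rangle$. *)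

(* Defs.v *)
From mathcomp Require Import ssreflect ssrfun ssrbool eqtype ssrnat fintype bigop.
From Stdlib Require Import Reals ClassicalEpsilon.

Set Implicit Arguments.
Unset Strict Implicit.

(* Fiberwise model at a point q of Q (dim Q = n):
   T_q^*Q = Cov n = R^n, T_qQ = Vec n = R^n, pairing = dot product. *)
Definition Cov (n : nat) := 'I_n -> R.
Definition Vec (n : nat) := 'I_n -> R.

Definition zerov {n} : 'I_n -> R := fun _ => 0%R.
Definition addv {n} (a b : 'I_n -> R) : 'I_n -> R := fun i => (a i + b i)%R.
Definition scalev {n} (t : R) (a : 'I_n -> R) : 'I_n -> R := fun i => (t * a i)%R.

Definition pairing {n} (a : Cov n) (v : Vec n) : R :=
  \big[Rplus/0%R]_(i < n) (a i * v i)%R.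

(* a linear subspace of T_q^*Q (fiber of a subbundle) *)
Definition subspace {n} (V : Cov n -> Prop) : Prop :=
  V zerov /\ (forall a b, V a -> V b -> V (addv a b)) /\
  (forall t a, V a -> V (scalev t a)).

Definition fullspace {n} : Cov n -> Prop := fun _ => True.

Definition annihilator {n} (W : Cov n -> Prop) (v : Vec n) : Prop :=
  forall a, W a -> pairing a v = 0%R.

(* Quadratic form on V: F(a) = 1/2 <a, rho^#(a)> with rho a positive-definite
   inner product on V^*. Writing B(a,b) := <a, rho^#(b)> (= rho(rho^# a, rho^# b)),
   this says: F(a) = 1/2 B(a,a) on V with B bilinear, symmetric, positive
   definite on V. *)
Definition quad_form {n} (V : Cov n -> Prop) (F : Cov n -> R) : Prop :=
  exists B : Cov n -> Cov n -> R,
    (forall a b c, V a -> V b -> V c -> B (addv a b) c = (B a c + B b c)%R) /\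
    (forall t a c, V a -> V c -> B (scalev t a) c = (t * B a c)%R) /\
    (forall a b, V a -> V b -> B a b = B b a) /\
    (forall a, V a -> a <> zerov -> (0 < B a a)%R) /\
    (forall a, V a -> F a = (/2 * B a a)%R).

Definition is_fiber_deriv {n} (f : Cov n -> R) (a : Cov n) (v : Vec n) : Prop :=
  forall b : Cov n,
    derivable_pt_lim (fun t => f (addv a (scalev t b))) 0%R (pairing b v).

Definition FD {n} (f : Cov n -> R) (a : Cov n) : Vec n :=
  epsilon (inhabits (@zerov n)) (fun v => is_fiber_deriv f a v).

Definition FDinv {n} (f : Cov n -> R) (v : Vec n) : Cov n :=
  epsilon (inhabits (@zerov n)) (fun a => FD f a = v).

(* Main.v *)
Require Import Defs.
From mathcomp Require Import ssreflect ssrfun ssrbool eqtype ssrnat fintype bigop.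
From Stdlib Require Import Reals ClassicalEpsilon FunctionalExtensionality Classical Lra.
From mathcomp Require Import all_algebra.
From mathcomp Require Import Rstruct.
Require Import Defs.
Import GRing.Theory.
Delimit Scope ring_scope with ring.
Delimit Scope R_scope with R.
Open Scope R_scope.

Section Helpers.
Context {n : nat}.

Definition ev (j : 'I_n) : Cov n := fun i => if i == j then 1%R else 0%R.

Lemma pairing_e j (v : Vec n) : pairing (ev j) v = v j.
Proof.
rewrite /pairing.
change ((\sum_(i < n) (ev j i * v i)) = v j)%ring.
rewrite (bigD1 j) //= big1 /ev ?eqxx.
  by rewrite GRing.mul1r GRing.addr0.
by move=> i /negbTE ->; rewrite GRing.mul0r.
Qed.

Lemma pairing_addl (a b : Cov n) v : pairing (addv a b) v = (pairing a v + pairing b v)%R.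
Proof.
rewrite /pairing /addv.
change ((\sum_(i < n) ((a i + b i) * v i)) = (\sum_(i < n) (a i * v i)) + (\sum_(i < n) (b i * v i)))%ring.
rewrite -big_split /=; apply: eq_bigr => i _; by rewrite GRing.mulrDl.
Qed.

Lemma pairing_addr (a : Cov n) v w : pairing a (addv v w) = (pairing a v + pairing a w)%R.
Proof.
rewrite /pairing /addv.
change ((\sum_(i < n) (a i * (v i + w i))) = (\sum_(i < n) (a i * v i)) + (\sum_(i < n) (a i * w i)))%ring.
rewrite -big_split /=; apply: eq_bigr => i _; by rewrite GRing.mulrDr.
Qed.

Lemma pairing_zeror (a : Cov n) : pairing a zerov = 0%R.
Proof.
rewrite /pairing /zerov.
change ((\sum_(i < n) (a i * 0)) = 0)%ring.
by rewrite big1 // => i _; rewrite GRing.mulr0.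
Qed.

Lemma vec_ext (v w : Vec n) : (forall j, v j = w j) -> v = w.
Proof. move=> h; apply: functional_extensionality => j; exact: h. Qed.

Lemma pairing_ext (v w : Vec n) : (forall b, pairing b v = pairing b w) -> v = w.
Proof. move=> h; apply: vec_ext => j; by rewrite -!pairing_e. Qed.

Lemma decomp_sum (b : Cov n) :
  b = \big[addv/zerov]_(j < n) scalev (b j) (ev j).
Proof.
apply: vec_ext => i.
rewrite (big_morph (fun f : Cov n => f i) (id1 := 0%R) (op1 := Rplus)) //.
change (b i = \sum_(j < n) (b j * ev j i))%ring.
rewrite (bigD1 i) //= big1 /ev ?eqxx.
  by rewrite GRing.mulr1 GRing.addr0.
by move=> j /negbTE; rewrite eq_sym => ->; rewrite GRing.mulr0.
Qed.

Lemma expand (g : Cov n -> R) :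
  (forall a b, g (addv a b) = (g a + g b)%R) ->
  (forall t a, g (scalev t a) = (t * g a)%R) ->
  forall b, g b = pairing b (fun j => g (ev j)).
Proof.
move=> gA gS b.
have g0 : g zerov = 0%R.
  have -> : (zerov : Cov n) = scalev 0 zerov by apply: vec_ext => i; rewrite /scalev /zerov; lra.
  by rewrite gS Rmult_0_l.
rewrite {1}(decomp_sum b) (big_morph g (id1 := 0%R) (op1 := Rplus)) //.
rewrite /pairing; apply: eq_bigr => j _; by rewrite gS.
Qed.


Lemma deriv_poly (k c d : R) :
  derivable_pt_lim (fun t => d + t * k + t * t * c) 0 k.
Proof.
have h1 := derivable_pt_lim_const d 0.
have h2 := derivable_pt_lim_scal id k 0 1 (derivable_pt_lim_id 0).
have h3 := derivable_pt_lim_mult id id 0 1 1 (derivable_pt_lim_id 0) (derivable_pt_lim_id 0).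
have h4 := derivable_pt_lim_scal (mult_fct id id) c 0 _ h3.
have h5 := derivable_pt_lim_plus _ _ 0 _ _ h1 h2.
have h6 := derivable_pt_lim_plus _ _ 0 _ _ h5 h4.
have h7 : (0 + k * 1 + c * (1 * id 0 + id 0 * 1)) = k by rewrite /id; ring.
rewrite h7 in h6.
apply: (derivable_pt_lim_ext _ _ _ _ _ h6) => z.
by rewrite /plus_fct /mult_real_fct /mult_fct /fct_cte /id; ring.
Qed.

Lemma FD_spec (f : Cov n -> R) (a : Cov n) (v : Vec n) :
  (forall b, exists c, forall t, f (addv a (scalev t b)) = f a + t * pairing b v + t * t * c) ->
  FD f a = v.
Proof.
move=> hf.
have hv : is_fiber_deriv f a v.
  move=> b; have [c hc] := hf b.
  apply: (derivable_pt_lim_ext _ _ _ _ _ (deriv_poly (pairing b v) c (f a))) => z.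
  by rewrite hc.
have hex : exists w, is_fiber_deriv f a w by exists v.
have hs := epsilon_spec (inhabits (@zerov n)) _ hex.
rewrite /FD; apply: pairing_ext => b.
exact: (uniqueness_limite _ _ _ _ (hs b) (hv b)).
Qed.

Definition linmap (V : Cov n -> Prop) (P : Cov n -> Cov n) :=
  (forall a b, P (addv a b) = addv (P a) (P b)) /\
  (forall t a, P (scalev t a) = scalev t (P a)) /\ (forall a, V (P a)).

Section Quad.
Context {V : Cov n -> Prop} {F : Cov n -> R} {B : Cov n -> Cov n -> R}.
Hypothesis BA : forall a b c, V a -> V b -> V c -> B (addv a b) c = (B a c + B b c).
Hypothesis BS : forall t a c, V a -> V c -> B (scalev t a) c = (t * B a c).
Hypothesis BC : forall a b, V a -> V b -> B a b = B b a.
Hypothesis FB : forall a, V a -> F a = (/2 * B a a).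
Context {P : Cov n -> Cov n}.
Hypothesis hP : linmap V P.

Lemma quad_expand a b t :
  F (P (addv a (scalev t b))) = F (P a) + t * B (P a) (P b) + t * t * (/2 * B (P b) (P b)).
Proof.
have [PA [PS PV]] := hP.
have hx := PV a; have hy := PV b; have hty := PV (scalev t b); have hs := PV (addv a (scalev t b)).
rewrite PA PS in hs; rewrite PS in hty.
set x := P a in hx hs *; set y := P b in hy hs hty *.
have e1 : B (addv x (scalev t y)) (addv x (scalev t y)) =
  B x x + t * B x y + t * (B x y + t * B y y).
  rewrite BA // BS // (BC x) // (BC y) // !BA // !BS // (BC y x) //.
rewrite !FB // PA PS e1; field.
Qed.

Lemma B_lin_r a :
  (forall b c, B (P a) (P (addv b c)) = B (P a) (P b) + B (P a) (P c)) /\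
  (forall t b, B (P a) (P (scalev t b)) = t * B (P a) (P b)).
Proof.
have [PA [PS PV]] := hP.
split.
  move=> b c; rewrite PA BC ?BA //; last by rewrite -PA.
  by rewrite !(BC (P a)).
move=> t b; rewrite PS BC ?BS //; last by rewrite -PS.
by rewrite BC.
Qed.

Lemma B_lin_l b :
  (forall a c, B (P (addv a c)) (P b) = B (P a) (P b) + B (P c) (P b)) /\
  (forall t a, B (P (scalev t a)) (P b) = t * B (P a) (P b)).
Proof.
have [PA [PS PV]] := hP.
split.
  by move=> a c; rewrite PA BA // -PA.
by move=> t a; rewrite PS BS // -PS.
Qed.

Lemma B0l y : V zerov -> V y -> B zerov y = 0.
Proof.
move=> h0 hy.
have e : (zerov : Cov n) = scalev 0 zerov by apply: vec_ext => i; rewrite /scalev /zerov; ring.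
by rewrite e BS -?e //; ring.
Qed.

Lemma B0r y : V zerov -> V y -> B y zerov = 0.
Proof. by move=> h0 hy; rewrite BC // B0l. Qed.

Lemma Bnonneg x : (forall a, V a -> a <> zerov -> 0 < B a a) -> V zerov -> V x -> 0 <= B x x.
Proof.
move=> hpos h0 hx; case: (classic (x = zerov)) => [->|hne].
  by rewrite B0l //; lra.
by apply: Rlt_le; apply: hpos.
Qed.

Definition grad a : Vec n := fun j => B (P a) (P (ev j)).

Lemma pairing_grad a b : pairing b (grad a) = B (P a) (P b).
Proof.
have [h1 h2] := B_lin_r a.
by rewrite (@expand (fun b => B (P a) (P b))).
Qed.

Lemma FD_quad a : FD (fun x => F (P x)) a = grad a.
Proof.
apply: FD_spec => b; exists (/2 * B (P b) (P b)) => t.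
by rewrite quad_expand pairing_grad.
Qed.

End Quad.


Lemma pairing_scaler (a : Cov n) t v : pairing a (scalev t v) = t * pairing a v.
Proof.
rewrite /pairing /scalev.
change ((\sum_(i < n) (a i * (t * v i))) = t * (\sum_(i < n) (a i * v i)))%ring.
rewrite GRing.mulr_sumr; apply: eq_bigr => i _.
by rewrite GRing.mulrA [(a i * t)%ring]GRing.mulrC GRing.mulrA.
Qed.

Open Scope ring_scope.
Lemma surj (f : Cov n -> Vec n) :
  (forall a b, f (addv a b) = addv (f a) (f b)) ->
  (forall t a, f (scalev t a) = scalev t (f a)) ->
  (forall a, f a = zerov -> a = zerov) -> forall v, exists a, f a = v.
Proof.
move=> fA fS finj v.
have fe : forall a j, f a j = pairing a (fun i => f (ev i) j).
  move=> a j; apply: (@expand (fun a => f a j)).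
    by move=> x y; rewrite fA.
  by move=> t x; rewrite fS.
pose M : 'M[R]_n := \matrix_(i, j) f (ev i) j.
have fM : forall a j, f a j = ((\row_i a i) *m M) ord0 j.
  move=> a j; rewrite fe mxE /pairing.
  change ((\sum_(i < n) (a i * f (ev i) j)) = \sum_(i < n) (\row_i a i) ord0 i * M i j)%ring.
  by apply: eq_bigr => i _; rewrite !mxE.
have Mu : M \in unitmx.
  rewrite unitmxE unitfE; apply/negP => /det0P [u un0 uM].
  have h : (fun i => u ord0 i) = zerov.
    apply: finj; apply: vec_ext => j; rewrite fM.
    have -> : (\row_i u ord0 i) = u by apply/rowP => i; rewrite mxE.
    by rewrite uM mxE.
  move/negP: un0; apply; apply/eqP/rowP => i; rewrite mxE.
  exact: (congr1 (fun g => g i) h).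
exists (fun i => ((\row_i v i) *m invmx M) ord0 i).
apply: vec_ext => j; rewrite fM.
have -> : (\row_i ((\row_i v i) *m invmx M) ord0 i) = (\row_i v i) *m invmx M.
  by apply/rowP => i; rewrite mxE.
by rewrite mulmxKV // mxE.
Qed.
Open Scope R_scope.

End Helpers.

Lemma uniq_dec n (W What : Cov n -> Prop) :
  subspace W -> subspace What -> (forall a, What a -> W a -> a = zerov) ->
  forall x1 y1 x2 y2, What x1 -> What x2 -> W y1 -> W y2 ->
  addv x1 y1 = addv x2 y2 -> x1 = x2 /\ y1 = y2.
Proof.
move=> [_ [WA WS]] [_ [WhA WhS]] hcap x1 y1 x2 y2 h1 h2 h3 h4 e.
have ei : forall i, x1 i + y1 i = x2 i + y2 i.
  by move=> i; move: (congr1 (fun g => g i) e); rewrite /addv.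
have hd : addv x1 (scalev (-1) x2) = zerov.
  apply: hcap; first by apply: WhA => //; apply: WhS.
  have -> : addv x1 (scalev (-1) x2) = addv y2 (scalev (-1) y1).
    by apply: vec_ext => i; rewrite /addv /scalev; move: (ei i); lra.
  by apply: WA => //; apply: WS.
have di : forall i, x1 i = x2 i.
  by move=> i; move: (congr1 (fun g => g i) hd); rewrite /addv /scalev /zerov; lra.
split; apply: vec_ext => i; first exact: di.
by move: (ei i) (di i); lra.
Qed.

Theorem mainTheorem3 (n : nat)
  (W What : Cov n -> Prop) (p ph : Cov n -> Cov n)
  (H K L : Cov n -> R) (dh dhh : Cov n) :
  subspace W -> subspace What ->
  (forall a, What a -> W a -> a = zerov) ->
  (forall a, What (ph a)) -> (forall a, W (p a)) ->
  (forall a, a = addv (ph a) (p a)) ->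
  quad_form fullspace H -> quad_form What K -> quad_form W L ->
  let Hh := fun a => (K (ph a) + L (p a))%R in
  (forall s, What s -> FD (fun a => L (p a)) s = zerov) /\
  ((forall v, annihilator W v ->
      (pairing dhh (FD H (FDinv Hh v)) - pairing dh (FD Hh (FDinv Hh v)))%R = 0%R)
   <->
   (forall s, What s ->
      (pairing dhh (FD H s) - pairing dh (FD (fun a => K (ph a)) s))%R = 0%R)).
Proof.
move=> hW hWh hcap hph hp hdec qH qK qL Hh.
have UD := @uniq_dec n W What hW hWh hcap.
have W0 : W zerov by case: hW.
have Wh0 : What zerov by case: hWh.
have [WA WS] : (forall a b, W a -> W b -> W (addv a b)) /\ (forall t a, W a -> W (scalev t a)) by case: hW => _ [].
have [WhA WhS] : (forall a b, What a -> What b -> What (addv a b)) /\ (forall t a, What a -> What (scalev t a)) by case: hWh => _ [].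
have linA : forall a b, ph (addv a b) = addv (ph a) (ph b) /\ p (addv a b) = addv (p a) (p b).
  move=> a b; apply: (UD _ _ _ _ (hph _) (WhA _ _ (hph a) (hph b)) (hp _) (WA _ _ (hp a) (hp b))).
  rewrite -hdec; apply: vec_ext => i; rewrite {1}(hdec a) {1}(hdec b) /addv; ring.
have linS : forall t a, ph (scalev t a) = scalev t (ph a) /\ p (scalev t a) = scalev t (p a).
  move=> t a; apply: (UD _ _ _ _ (hph _) (WhS _ _ (hph a)) (hp _) (WS _ _ (hp a))).
  rewrite -hdec; apply: vec_ext => i; rewrite {1}(hdec a) /addv /scalev; ring.
have lph : linmap What ph.
  by split; [move=> a b; case: (linA a b) | split; [move=> t a; case: (linS t a) | exact: hph]].
have lp : linmap W p.
  by split; [move=> a b; case: (linA a b) | split; [move=> t a; case: (linS t a) | exact: hp]].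
have lid : @linmap n (@fullspace n) (fun x : Cov n => x) by [].
have pWh : forall s, What s -> p s = zerov.
  move=> s hs; have [] := UD s zerov (ph s) (p s) hs (hph s) W0 (hp s) => //.
  by rewrite -hdec; apply: vec_ext => i; rewrite /addv /zerov; ring.
have phW : forall b, W b -> ph b = zerov.
  move=> b hb; have [] := UD zerov b (ph b) (p b) Wh0 (hph b) hb (hp b) => //.
  by rewrite -hdec; apply: vec_ext => i; rewrite /addv /zerov; ring.
have pp : forall a, p (p a) = p a.
  move=> a; have [] := UD zerov (p a) (ph (p a)) (p (p a)) Wh0 (hph _) (hp a) (hp _) => //.
  by rewrite -hdec; apply: vec_ext => i; rewrite /addv /zerov; ring.
case: qH => BH [HA [HS [HC [HP HF]]]].
case: qK => BK [KA [KS [KC [KP KF]]]].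
case: qL => BL [LA [LS [LC [LP LF]]]].
have FK : forall a, FD (fun x => K (ph x)) a = @grad _ BK ph a.
  move=> a; exact: (FD_quad KA KS KC KF lph).
have FL : forall a, FD (fun x => L (p x)) a = @grad _ BL p a.
  move=> a; exact: (FD_quad LA LS LC LF lp).
have FH : forall a, FD H a = @grad _ BH (fun x => x) a.
  move=> a; exact (FD_quad HA HS HC HF lid a).
have FHh : forall a, FD Hh a = addv (@grad _ BK ph a) (@grad _ BL p a).
  move=> a; apply: FD_spec => b.
  exists (/2 * BK (ph b) (ph b) + /2 * BL (p b) (p b)) => t.
  rewrite /Hh (quad_expand KA KS KC KF lph) (quad_expand LA LS LC LF lp).
  rewrite pairing_addr (pairing_grad KA KS KC lph) (pairing_grad LA LS LC lp); ring.
have pFHh : forall a b, pairing b (FD Hh a) = BK (ph a) (ph b) + BL (p a) (p b).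
  by move=> a b; rewrite FHh pairing_addr (pairing_grad KA KS KC lph) (pairing_grad LA LS LC lp).
have part1 : forall s, What s -> FD (fun a => L (p a)) s = zerov.
  move=> s hs; rewrite FL; apply: pairing_ext => b.
  by rewrite (pairing_grad LA LS LC lp) pairing_zeror pWh // (B0l LS).
split; first exact: part1.
have FhA : forall a b, FD Hh (addv a b) = addv (FD Hh a) (FD Hh b).
  move=> a b; apply: pairing_ext => c.
  rewrite pairing_addr !pFHh.
  have [k1 _] := B_lin_l KA KS lph c; have [l1 _] := B_lin_l LA LS lp c.
  rewrite k1 l1; ring.
have FhS : forall t a, FD Hh (scalev t a) = scalev t (FD Hh a).
  move=> t a; apply: pairing_ext => c.
  rewrite pairing_scaler !pFHh.
  have [_ k2] := B_lin_l KA KS lph c; have [_ l2] := B_lin_l LA LS lp c.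
  rewrite k2 l2; ring.
have Fh0 : forall a, FD Hh a = zerov -> a = zerov.
  move=> a ha.
  have e : pairing a (FD Hh a) = 0 by rewrite ha pairing_zeror.
  rewrite pFHh in e.
  have n1 := Bnonneg KS _ KP Wh0 (hph a).
  have n2 := Bnonneg LS _ LP W0 (hp a).
  have z1 : ph a = zerov.
    apply: NNPP => hne; have := KP _ (hph a) hne; lra.
  have z2 : p a = zerov.
    apply: NNPP => hne; have := LP _ (hp a) hne; lra.
  rewrite (hdec a) z1 z2; apply: vec_ext => i; rewrite /addv /zerov; ring.
have Fhinj : forall a a', FD Hh a = FD Hh a' -> a = a'.
  move=> a a' e.
  have hz : addv a (scalev (-1) a') = zerov.
    apply: Fh0; rewrite FhA FhS e; apply: vec_ext => i; rewrite /addv /scalev /zerov; ring.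
  apply: vec_ext => i; move: (congr1 (fun g => g i) hz); rewrite /addv /scalev /zerov; lra.
have Fhsurj := surj (FD Hh) FhA FhS Fh0.
have FDinvP : forall v, FD Hh (FDinv Hh v) = v.
  move=> v; have hex := Fhsurj v.
  exact: (epsilon_spec (inhabits (@zerov n)) _ hex).
have annWh : forall a, annihilator W (FD Hh a) -> What a.
  move=> a ha; have e := ha _ (hp a).
  rewrite pFHh (phW (p a) (hp a)) (pp a) (B0r KS KC _ Wh0 (hph a)) in e.
  have n2 := Bnonneg LS _ LP W0 (hp a).
  have z2 : p a = zerov.
    apply: NNPP => hne; have := LP _ (hp a) hne; lra.
  have -> : a = ph a.
    by rewrite {1}(hdec a) z2; apply: vec_ext => i; rewrite /addv /zerov; ring.
  exact: hph.
have Whann : forall s, What s -> annihilator W (FD Hh s).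
  move=> s hs b hb.
  rewrite pFHh (phW b hb) (pWh s hs) (B0r KS KC _ Wh0 (hph s)) (B0l LS _ W0 (hp b)); ring.
have FhK : forall s, What s -> FD Hh s = FD (fun x => K (ph x)) s.
  move=> s hs; rewrite FHh FK; apply: vec_ext => j.
  by rewrite /addv (_ : @grad _ BL p s = zerov) -?FL ?part1 // /zerov; ring.
split.
- move=> hyp s hs.
  have := hyp _ (Whann s hs).
  have -> : FDinv Hh (FD Hh s) = s by apply: Fhinj; rewrite FDinvP.
  by rewrite FhK.
- move=> hyp v hv.
  have ha : What (FDinv Hh v) by apply: annWh; rewrite FDinvP.
  by rewrite FhK //; apply: hyp.
Qed.
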